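(* Let $P\in\Delta_{\mathcal{T},\mathcal{X},\mathcal{Y}}$ such that under $P$, $T$ is conditionally independent of $X$ given $Y$, and $T$ is conditionally independent of $Y$ given $X$. If there exist $x_0\in\mathcal{X}$, $y_0\in\mathcal{Y}$ with $P(X=x_0,Y=y_0)>0$, $H_P(X\mid Y=y_0)\neq 0$ and $H_P(Y\mid X=x_0)\ne 0$, then $\arg\max_{Q\in\Delta_P}H_Q(T\mid X,Y)$ contains more than one element.
   Context: $T,X,Y$ are random variables with finite state spaces $\mathcal{T},\mathcal{X},\mathcal{Y}$; $\Delta_{\mathcal{T},\mathcal{X},\mathcal{Y}}$ is the set of all joint distributions on $\mathcal{T}\times\mathcal{X}\times\mathcal{Y}$. For $P\in\Delta_{\mathcal{T},\mathcal{X},\mathcal{Y}}$, $\Delta_P=\{Q\in\Delta_{\mathcal{T},\mathcal{X},\mathcal{Y}}: Q(X=x,T=t)=P(X=x,T=t),\ Q(Y=y,T=t)=P(Y=y,T=t)\ \forall x,y,t\}$. $H_P(X\mid Y=y_0)$ is the entropy of the conditional distribution of $X$ given $Y=y_0$ under $P$; $H_Q(T\mid X,Y)$ the conditional entropy under $Q$. *)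

(* Defs.v *)
From Stdlib Require Import Reals.
From mathcomp Require Import all_boot.
Open Scope R_scope.

Definition fsum {A : finType} (f : A -> R) : R :=
  List.fold_right (fun a acc => f a + acc) 0 (enum A).

Section Dist.
Context {T X Y : finType}.

Definition is_dist (P : T -> X -> Y -> R) : Prop :=
  (forall t x y, 0 <= P t x y) /\
  fsum (fun t => fsum (fun x => fsum (fun y => P t x y))) = 1.

Definition margTX (P : T -> X -> Y -> R) (t : T) (x : X) : R := fsum (fun y => P t x y).
Definition margTY (P : T -> X -> Y -> R) (t : T) (y : Y) : R := fsum (fun x => P t x y).
Definition margXY (P : T -> X -> Y -> R) (x : X) (y : Y) : R := fsum (fun t => P t x y).
Definition margX (P : T -> X -> Y -> R) (x : X) : R := fsum (fun y => margXY P x y).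
Definition margY (P : T -> X -> Y -> R) (y : Y) : R := fsum (fun x => margXY P x y).

Definition DeltaP (P Q : T -> X -> Y -> R) : Prop :=
  is_dist Q /\
  (forall t x, margTX Q t x = margTX P t x) /\
  (forall t y, margTY Q t y = margTY P t y).

Definition CI_T_X_given_Y (P : T -> X -> Y -> R) : Prop :=
  forall t x y, P t x y * margY P y = margTY P t y * margXY P x y.

Definition CI_T_Y_given_X (P : T -> X -> Y -> R) : Prop :=
  forall t x y, P t x y * margX P x = margTX P t x * margXY P x y.

Definition xlnx (p : R) : R := if Rlt_dec 0 p then p * ln p else 0.

Definition H_X_given_Y_eq (P : T -> X -> Y -> R) (y0 : Y) : R :=
  - fsum (fun x => xlnx (margXY P x y0 / margY P y0)).

Definition H_Y_given_X_eq (P : T -> X -> Y -> R) (x0 : X) : R :=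
  - fsum (fun y => xlnx (margXY P x0 y / margX P x0)).

Definition H_T_given_XY (Q : T -> X -> Y -> R) : R :=
  - fsum (fun t => fsum (fun x => fsum (fun y =>
      if Rlt_dec 0 (Q t x y) then Q t x y * ln (Q t x y / margXY Q x y) else 0))).

Definition in_argmax_condH (P Q : T -> X -> Y -> R) : Prop :=
  DeltaP P Q /\ forall Q', DeltaP P Q' -> H_T_given_XY Q' <= H_T_given_XY Q.

End Dist.

(* Main.v *)
Require Import Defs.
From Stdlib Require Import Reals Lra Classical.
From mathcomp Require Import all_boot.
Open Scope R_scope.

Definition lsum {A : Type} (l : seq A) (f : A -> R) : R :=
  List.fold_right (fun a acc => f a + acc) 0 l.

Lemma fsumE {A : finType} (f : A -> R) : fsum f = lsum (enum A) f.
Proof. reflexivity. Qed.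

Lemma lsum_ext {A : Type} (l : seq A) f g :
  (forall a, f a = g a) -> lsum l f = lsum l g.
Proof. move=> H; elim: l => [|a l IH] //=; rewrite H IH; reflexivity. Qed.

Lemma lsum_add {A : Type} (l : seq A) f g :
  lsum l (fun a => f a + g a) = lsum l f + lsum l g.
Proof. elim: l => [|a l IH] /=; [lra|]. rewrite IH; lra. Qed.

Lemma lsum_mulr {A : Type} (l : seq A) c f :
  lsum l (fun a => c * f a) = c * lsum l f.
Proof. elim: l => [|a l IH] /=; [lra|]. rewrite IH; lra. Qed.

Lemma lsum_zero {A : Type} (l : seq A) : lsum l (fun _ => 0) = 0.
Proof. elim: l => [|a l IH] /=; [lra|]. rewrite IH; lra. Qed.

Lemma lsum_le {A : Type} (l : seq A) f g :
  (forall a, f a <= g a) -> lsum l f <= lsum l g.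
Proof. move=> H; elim: l => [|a l IH] /=; [lra|]. have := H a; lra. Qed.

Lemma lsum_swap {A B : Type} (l1 : seq A) (l2 : seq B) (f : A -> B -> R) :
  lsum l1 (fun a => lsum l2 (fun b => f a b)) =
  lsum l2 (fun b => lsum l1 (fun a => f a b)).
Proof.
elim: l1 => [|a l IH] /=; first by rewrite lsum_zero.
rewrite IH lsum_add; reflexivity.
Qed.

Lemma lsum_term {A : eqType} (l : seq A) f a :
  (forall b, 0 <= f b) -> a \in l -> f a <= lsum l f.
Proof.
move=> H; elim: l => [|b l IH] //=. rewrite in_cons => /orP [/eqP ->|Ha].
- have : 0 <= lsum l f by (rewrite -(lsum_zero l); apply lsum_le).
  lra.
- have := IH Ha. have := H b. lra.
Qed.

Lemma lsum_zero_on {A : eqType} (l : seq A) f :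
  (forall x, x \in l -> f x = 0) -> lsum l f = 0.
Proof.
elim: l => [|b l IH] H //=. rewrite H ?mem_head // IH; [lra|].
move=> x Hx; apply H; by rewrite in_cons Hx orbT.
Qed.

Lemma lsum_delta {A : eqType} (l : seq A) f a :
  uniq l -> a \in l -> (forall x, x <> a -> f x = 0) -> lsum l f = f a.
Proof.
move=> + + H; elim: l => [|b l IH] //= /andP [Hb Hu].
rewrite in_cons; case: (eqVneq a b) => [E|Hab] /= Ha.
- subst a. rewrite lsum_zero_on; [lra|]. move=> x Hx; apply H => Hxa.
  subst x. by rewrite Hx in Hb.
- rewrite H; last by move=> E; move: Hab; rewrite E eqxx.
  rewrite IH //; lra.
Qed.

Lemma fsum_ext {A : finType} (f g : A -> R) :
  (forall a, f a = g a) -> fsum f = fsum g.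
Proof. exact: lsum_ext. Qed.
Lemma fsum_add {A : finType} (f g : A -> R) :
  fsum (fun a => f a + g a) = fsum f + fsum g.
Proof. exact: lsum_add. Qed.
Lemma fsum_mulr {A : finType} c (f : A -> R) :
  fsum (fun a => c * f a) = c * fsum f.
Proof. exact: lsum_mulr. Qed.
Lemma fsum_zero {A : finType} : fsum (fun _ : A => 0) = 0.
Proof. exact: lsum_zero. Qed.
Lemma fsum_le {A : finType} (f g : A -> R) :
  (forall a, f a <= g a) -> fsum f <= fsum g.
Proof. exact: lsum_le. Qed.
Lemma fsum_swap {A B : finType} (f : A -> B -> R) :
  fsum (fun a => fsum (fun b => f a b)) = fsum (fun b => fsum (fun a => f a b)).
Proof. exact: lsum_swap. Qed.
Lemma fsum_term {A : finType} (f : A -> R) a :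
  (forall b, 0 <= f b) -> f a <= fsum f.
Proof. move=> H; apply: lsum_term => //; by rewrite mem_enum. Qed.
Lemma fsum_nonneg {A : finType} (f : A -> R) :
  (forall b, 0 <= f b) -> 0 <= fsum f.
Proof. move=> H; rewrite -(@fsum_zero A); exact: fsum_le. Qed.
Lemma fsum_delta {A : finType} (f : A -> R) a :
  (forall x, x <> a -> f x = 0) -> fsum f = f a.
Proof. move=> H; apply: lsum_delta => //; [exact: enum_uniq| by rewrite mem_enum]. Qed.
Lemma fsum_pos {A : finType} (f : A -> R) :
  0 < fsum f -> exists a, 0 < f a.
Proof.
move=> H; apply NNPP => Hn.
have : fsum f <= fsum (fun _ : A => 0).
  apply fsum_le => a; apply Rnot_lt_le => Ha; apply Hn; by exists a.
rewrite fsum_zero; lra.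
Qed.

Section Ent.
Context {T X Y : finType}.
Implicit Types P Q : T -> X -> Y -> R.

Definition Lf P t y : R :=
  if Rlt_dec 0 (margTY P t y) then ln (margTY P t y / margY P y) else 0.
Definition MP P : R := fsum (fun t => fsum (fun y => margTY P t y * Lf P t y)).
Definition hterm Q t x y : R :=
  if Rlt_dec 0 (Q t x y) then Q t x y * ln (Q t x y / margXY Q x y) else 0.

Lemma HE Q : H_T_given_XY Q = - fsum (fun t => fsum (fun x => fsum (fun y => hterm Q t x y))).
Proof. reflexivity. Qed.

Lemma sumQL P Q : (forall t y, margTY Q t y = margTY P t y) ->
  fsum (fun t => fsum (fun x => fsum (fun y => Q t x y * Lf P t y))) = MP P.
Proof.
move=> HQ; apply fsum_ext => t; rewrite fsum_swap; apply fsum_ext => y.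
rewrite -HQ /margTY Rmult_comm -fsum_mulr; apply fsum_ext => x; ring.
Qed.

Lemma margXY_ge {Q} t x y : (forall t x y, 0 <= Q t x y) -> Q t x y <= margXY Q x y.
Proof. move=> H; apply: (fsum_term (fun t => Q t x y)) => b; exact: H. Qed.
Lemma margTY_ge {Q} t x y : (forall t x y, 0 <= Q t x y) -> Q t x y <= margTY Q t y.
Proof. move=> H; apply: (fsum_term (fun x => Q t x y)) => b; exact: H. Qed.
Lemma margTX_ge {Q} t x y : (forall t x y, 0 <= Q t x y) -> Q t x y <= margTX Q t x.
Proof. move=> H; apply: (fsum_term (fun y => Q t x y)) => b; exact: H. Qed.
Lemma margXY_nn {Q} x y : (forall t x y, 0 <= Q t x y) -> 0 <= margXY Q x y.
Proof. move=> H; apply: fsum_nonneg => b; exact: H. Qed.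
Lemma margTY_nn {Q} t y : (forall t x y, 0 <= Q t x y) -> 0 <= margTY Q t y.
Proof. move=> H; apply: fsum_nonneg => b; exact: H. Qed.
Lemma margY_ge {Q} x y : (forall t x y, 0 <= Q t x y) -> margXY Q x y <= margY Q y.
Proof. move=> H; apply: (fsum_term (fun x => margXY Q x y)) => b; exact: margXY_nn. Qed.
Lemma margX_ge {Q} x y : (forall t x y, 0 <= Q t x y) -> margXY Q x y <= margX Q x.
Proof. move=> H; apply: (fsum_term (fun y => margXY Q x y)) => b; exact: margXY_nn. Qed.
Lemma margY_sumTY {Q} y : fsum (fun t => margTY Q t y) = margY Q y.
Proof. rewrite /margY /margTY /margXY fsum_swap; reflexivity. Qed.
Lemma margY_geTY {Q} t y : (forall t x y, 0 <= Q t x y) -> margTY Q t y <= margY Q y.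
Proof. move=> H; rewrite -margY_sumTY; apply: (fsum_term (fun t => margTY Q t y)) => b; exact: margTY_nn. Qed.

Lemma H_eq P Q : (forall t x y, 0 <= Q t x y) ->
  (forall t y, margTY Q t y = margTY P t y) ->
  (forall t x y, Q t x y * margY P y = margTY P t y * margXY Q x y) ->
  H_T_given_XY Q = - MP P.
Proof.
move=> Hnn HQ Hid; rewrite HE -(sumQL P Q HQ); f_equal.
apply fsum_ext => t; apply fsum_ext => x; apply fsum_ext => y.
rewrite /hterm /Lf; case: (Rlt_dec 0 (Q t x y)) => Hq /=.
- have Hxy := margXY_ge t x y Hnn. have Hty := margTY_ge t x y Hnn.
  rewrite HQ in Hty.
  case: (Rlt_dec 0 (margTY P t y)) => Hp /=; last lra.
  have Hid' := Hid t x y.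
  have HPY : 0 < margY P y by nra.
  f_equal; f_equal. field_simplify_eq; [|lra]. lra.
- have : Q t x y = 0 by have := Hnn t x y; lra.
  move=> ->; ring.
Qed.

Lemma ln_le_m1 u : 0 < u -> ln u <= u - 1.
Proof. move=> Hu; have := exp_ineq1_le (ln u); rewrite exp_ln //; lra. Qed.

Lemma fsum_sub {A : finType} (f g : A -> R) :
  fsum (fun a => f a - g a) = fsum f - fsum g.
Proof.
have -> : fsum f - fsum g = fsum f + -1 * fsum g by ring.
rewrite -(fsum_mulr (-1)) -fsum_add; apply fsum_ext => a; ring.
Qed.
Lemma fsum3_add (f g : T -> X -> Y -> R) :
  fsum (fun t => fsum (fun x => fsum (fun y => f t x y + g t x y))) =
  fsum (fun t => fsum (fun x => fsum (fun y => f t x y))) +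
  fsum (fun t => fsum (fun x => fsum (fun y => g t x y))).
Proof.
rewrite -fsum_add; apply fsum_ext => t; rewrite -fsum_add; apply fsum_ext => x.
exact: fsum_add.
Qed.
Lemma fsum3_sub (f g : T -> X -> Y -> R) :
  fsum (fun t => fsum (fun x => fsum (fun y => f t x y - g t x y))) =
  fsum (fun t => fsum (fun x => fsum (fun y => f t x y))) -
  fsum (fun t => fsum (fun x => fsum (fun y => g t x y))).
Proof.
rewrite -fsum_sub; apply fsum_ext => t; rewrite -fsum_sub; apply fsum_ext => x.
exact: fsum_sub.
Qed.

Lemma H_le P Q : (forall t x y, 0 <= P t x y) -> DeltaP P Q -> H_T_given_XY Q <= - MP P.
Proof.
move=> HPn [[Hnn Hsum] [HTX HTY]].
set g := fun t x y => margXY Q x y * / margY P y * margTY P t y.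
have Hpt : forall t x y, hterm Q t x y >= Q t x y * Lf P t y + Q t x y - g t x y.
  move=> t x y; rewrite /hterm /Lf /g.
  have HTYle := margY_geTY t y HPn. have HTYnn := margTY_nn t y HPn.
  case: (Rlt_dec 0 (Q t x y)) => Hq /=.
  - have Hxy := margXY_ge t x y Hnn. have Hty := margTY_ge t x y Hnn.
    rewrite HTY in Hty.
    case: (Rlt_dec 0 (margTY P t y)) => Hp /=; last lra.
    set a := margTY P t y / margY P y.
    set b := Q t x y / margXY Q x y.
    have Ha : 0 < a by apply Rdiv_lt_0_compat; lra.
    have Hb : 0 < b by apply Rdiv_lt_0_compat; lra.
    have Hba : b = a / (a / b) by field; lra.
    have Hu : 0 < a / b by apply Rdiv_lt_0_compat.
    have Hlb : ln b = ln a - ln (a / b).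
      rewrite {1}Hba; move: Hu; set u := a / b => Hu.
      rewrite /Rdiv ln_mult //; last exact: Rinv_0_lt_compat.
      rewrite ln_Rinv //; ring.
    have Hlu := ln_le_m1 (a / b) Hu.
    have Hqu : Q t x y * (a / b) = margXY Q x y * / margY P y * margTY P t y.
      rewrite /a /b; field; lra.
    rewrite Hlb. nra.
  - have -> : Q t x y = 0 by have := Hnn t x y; lra.
    have : 0 <= margXY Q x y * / margY P y * margTY P t y.
      case: (Req_dec (margY P y) 0) => H0.
      + have -> : margTY P t y = 0 by lra. lra.
      + apply Rmult_le_pos; [|lra]. apply Rmult_le_pos; [exact: margXY_nn|].
        apply Rlt_le, Rinv_0_lt_compat; lra.
    lra.
have Hg : fsum (fun t => fsum (fun x => fsum (fun y => g t x y))) <= 1.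
  have E1 : fsum (fun t => fsum (fun x => fsum (fun y => g t x y))) =
     fsum (fun x => fsum (fun y => fsum (fun t => g t x y))).
    rewrite fsum_swap; apply fsum_ext => x; by rewrite fsum_swap.
  have E2 : fsum (fun t => fsum (fun x => fsum (fun y => Q t x y))) =
     fsum (fun x => fsum (fun y => fsum (fun t => Q t x y))).
    rewrite fsum_swap; apply fsum_ext => x; by rewrite fsum_swap.
  rewrite E1 -Hsum E2.
  apply fsum_le => x; apply fsum_le => y.
  rewrite /g (fsum_mulr (margXY Q x y * / margY P y) (fun t => margTY P t y)) margY_sumTY.
  case: (Req_dec (margY P y) 0) => H0.
  - rewrite H0 Rmult_0_r. have := margXY_nn x y Hnn. rewrite /margXY. lra.
  - have -> : margXY Q x y * / margY P y * margY P y = margXY Q x y by field.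
    rewrite /margXY; lra.
have Hsum2 := sumQL P Q HTY.
have Hle : fsum (fun t => fsum (fun x => fsum (fun y =>
              Q t x y * Lf P t y + Q t x y - g t x y)))
           <= fsum (fun t => fsum (fun x => fsum (fun y => hterm Q t x y))).
  apply fsum_le => t; apply fsum_le => x; apply fsum_le => y; have := Hpt t x y; lra.
have Hsplit : fsum (fun t => fsum (fun x => fsum (fun y =>
              Q t x y * Lf P t y + Q t x y - g t x y))) =
   fsum (fun t => fsum (fun x => fsum (fun y => Q t x y * Lf P t y)))
   + fsum (fun t => fsum (fun x => fsum (fun y => Q t x y)))
   - fsum (fun t => fsum (fun x => fsum (fun y => g t x y))).
  have H1 := fsum3_sub (fun t x y => Q t x y * Lf P t y + Q t x y) g.
  have H2 := fsum3_add (fun t x y => Q t x y * Lf P t y) Q.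
  cbv beta in H1, H2. rewrite H1 H2. reflexivity.
rewrite HE; lra.
Qed.

End Ent.

Lemma exists_other {A : finType} (f : A -> R) a :
  (forall b, 0 <= f b) -> 0 < f a ->
  - fsum (fun x => xlnx (f x / fsum f)) <> 0 -> exists b, b <> a /\ 0 < f b.
Proof.
move=> Hnn Ha H; apply NNPP => Hn; apply H.
have Hz : forall x, x <> a -> f x = 0.
  move=> x Hx; have := Hnn x; case: (Rlt_dec 0 (f x)) => Hl; [|lra].
  by exfalso; apply Hn; exists x.
rewrite (fsum_delta f a Hz).
rewrite (fsum_delta _ a).
- have -> : f a / f a = 1 by field; lra.
  rewrite /xlnx; case: (Rlt_dec 0 1) => /= H1; [rewrite ln_1|]; lra.
- move=> x Hx; rewrite Hz // /Rdiv Rmult_0_l /xlnx.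
  case: (Rlt_dec 0 0) => /= H0; lra.
Qed.

Lemma fsum_ind {A : finType} (a : A) : fsum (fun x => if x == a then 1 else 0) = 1.
Proof.
rewrite (fsum_delta _ a) ?eqxx // => x Hx.
by case: eqP.
Qed.

Lemma dcases {A : finType} (a b : A) (x : A) : a <> b ->
  let d := (if x == a then 1 else 0) - (if x == b then 1 else 0) in
  (d = 1 /\ x = a) \/ (d = -1 /\ x = b) \/ d = 0.
Proof.
move=> Hab /=; case: eqP => [->|Ha]; case: eqP => [E|Hb].
- by exfalso.
- left; split => //; ring.
- right; left; split => //; ring.
- right; right; ring.
Qed.

Lemma dsum {A : finType} (a b : A) :
  fsum (fun x => (if x == a then 1 else 0) - (if x == b then 1 else 0)) = 0.
Proof. rewrite fsum_sub !fsum_ind; ring. Qed.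

Theorem mainTheorem11 (T X Y : finType) (P : T -> X -> Y -> R) :
  is_dist P ->
  CI_T_X_given_Y P ->
  CI_T_Y_given_X P ->
  (exists (x0 : X) (y0 : Y),
      0 < margXY P x0 y0 /\
      H_X_given_Y_eq P y0 <> 0 /\
      H_Y_given_X_eq P x0 <> 0) ->
  exists Q1 Q2 : T -> X -> Y -> R,
    in_argmax_condH P Q1 /\ in_argmax_condH P Q2 /\ Q1 <> Q2.
Proof.
move=> HP CI1 CI2 [x0 [y0 [Hpos [HX HY]]]].
have HPn := proj1 HP.
have [x1 [Hx01 Hx1]] : exists b, b <> x0 /\ 0 < margXY P b y0.
  apply: (exists_other (fun x => margXY P x y0)) => //.
  move=> b; exact: margXY_nn.
have [y1 [Hy01 Hy1]] : exists b, b <> y0 /\ 0 < margXY P x0 b.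
  apply: (exists_other (fun y => margXY P x0 y)) => //.
  move=> b; exact: margXY_nn.
have HPY0 : 0 < margY P y0 by have := margY_ge x0 y0 HPn; lra.
have HPX0 : 0 < margX P x0 by have := margX_ge x0 y0 HPn; lra.
set c := fun t => P t x0 y0 / margXY P x0 y0.
have Hc : forall t, 0 <= c t.
  move=> t; rewrite /c; apply Rmult_le_pos; [exact: HPn|].
  apply Rlt_le, Rinv_0_lt_compat; lra.
have Fc : fsum c = 1.
  rewrite /c (fsum_ext _ (fun t => / margXY P x0 y0 * P t x0 y0)); last by move=> t; rewrite /Rdiv Rmult_comm.
  rewrite fsum_mulr /margXY. field. rewrite /margXY in Hpos; lra.
have F1 : forall t, P t x0 y1 = c t * margXY P x0 y1.
  move=> t; have E1 := CI2 t x0 y1; have E0 := CI2 t x0 y0.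
  rewrite /c. apply (Rmult_eq_reg_r (margX P x0 * margXY P x0 y0)); last nra.
  field_simplify; [|lra]. nra.
have F2 : forall t, P t x1 y0 = c t * margXY P x1 y0.
  move=> t; have E1 := CI1 t x1 y0; have E0 := CI1 t x0 y0.
  rewrite /c. apply (Rmult_eq_reg_r (margY P y0 * margXY P x0 y0)); last nra.
  field_simplify; [|lra]. nra.
have F3 : forall t, c t * margY P y0 = margTY P t y0.
  move=> t; have E0 := CI1 t x0 y0. rewrite /c.
  apply (Rmult_eq_reg_r (margXY P x0 y0)); last lra.
  field_simplify; [|lra]. lra.
have F4 : forall t, c t * margY P y1 = margTY P t y1.
  move=> t; have E0 := CI1 t x0 y1. rewrite F1 in E0.
  apply (Rmult_eq_reg_r (margXY P x0 y1)); last lra. lra.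
set d1 := fun x => (if x == x0 then 1 else 0) - (if x == x1 then 1 else 0).
set d2 := fun y => (if y == y0 then 1 else 0) - (if y == y1 then 1 else 0).
have Hd1 : forall x, (d1 x = 1 /\ x = x0) \/ (d1 x = -1 /\ x = x1) \/ d1 x = 0.
  move=> x; apply: dcases; by apply not_eq_sym.
have Hd2 : forall y, (d2 y = 1 /\ y = y0) \/ (d2 y = -1 /\ y = y1) \/ d2 y = 0.
  move=> y; apply: dcases; by apply not_eq_sym.
have Sd1 : fsum d1 = 0 by apply: dsum.
have Sd2 : fsum d2 = 0 by apply: dsum.
set eps := Rmin (margXY P x0 y1) (margXY P x1 y0).
have Heps : 0 < eps by apply Rmin_pos.
have Heps1 : eps <= margXY P x0 y1 by apply Rmin_l.
have Heps2 : eps <= margXY P x1 y0 by apply Rmin_r.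
set Q := fun t x y => P t x y + eps * c t * d1 x * d2 y.
have HTX : forall t x, margTX Q t x = margTX P t x.
  move=> t x; rewrite /margTX /Q fsum_add.
  rewrite (fsum_mulr (eps * c t * d1 x) d2) Sd2 Rmult_0_r Rplus_0_r; reflexivity.
have HTY : forall t y, margTY Q t y = margTY P t y.
  move=> t y; rewrite /margTY /Q fsum_add.
  rewrite (fsum_ext (fun x => eps * c t * d1 x * d2 y) (fun x => (eps * c t * d2 y) * d1 x)); last by move=> x; ring.
  rewrite fsum_mulr Sd1 Rmult_0_r Rplus_0_r; reflexivity.
have HXY : forall x y, margXY Q x y = margXY P x y + eps * d1 x * d2 y.
  move=> x y; rewrite /margXY /Q fsum_add.
  rewrite (fsum_ext (fun t => eps * c t * d1 x * d2 y) (fun t => (eps * d1 x * d2 y) * c t)); last by move=> t; ring.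
  rewrite fsum_mulr Fc Rmult_1_r; reflexivity.
have HQn : forall t x y, 0 <= Q t x y.
  move=> t x y; rewrite /Q; have := HPn t x y; have := Hc t.
  case: (Hd1 x) => [[-> ->]|[[-> ->]|->]];
  case: (Hd2 y) => [[-> ->]|[[-> ->]|->]]; try nra.
  - rewrite F1; nra.
  - rewrite F2; nra.
have HQd : is_dist Q.
  split => //. rewrite -(proj2 HP).
  apply fsum_ext => t; apply fsum_ext => x; exact: HTX.
have HDQ : DeltaP P Q by split => //; split.
have HDP : DeltaP P P by split => //; split.
have HidQ : forall t x y, Q t x y * margY P y = margTY P t y * margXY Q x y.
  move=> t x y; rewrite HXY /Q.
  have key : c t * d2 y * margY P y = margTY P t y * d2 y.
    case: (Hd2 y) => [[-> ->]|[[-> ->]|->]]; [|rewrite -F4|]; try ring.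
    rewrite -F3; ring.
  have E := CI1 t x y.
  have E2 : eps * c t * d1 x * d2 y * margY P y = margTY P t y * (eps * d1 x * d2 y).
    transitivity (eps * d1 x * (c t * d2 y * margY P y)); [ring|rewrite key; ring].
  rewrite Rmult_plus_distr_r Rmult_plus_distr_l E E2; reflexivity.
have HQval : H_T_given_XY Q = - MP P by apply: H_eq.
have HPval : H_T_given_XY P = - MP P by apply: H_eq => //; move=> t y; reflexivity.
exists P, Q; split; [|split].
- split => // Q' HQ'; rewrite HPval; exact: H_le.
- split => // Q' HQ'; rewrite HQval; exact: H_le.
- move=> E.
  have [t0 Ht0] : exists t, 0 < P t x0 y0 by apply: fsum_pos.
  have := f_equal (fun F => F t0 x0 y0) E; rewrite /Q /=.
  have Hd10 : d1 x0 = 1.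
    rewrite /d1 eqxx; case: eqP => [E'|_]; [by exfalso; apply Hx01|ring].
  have Hd20 : d2 y0 = 1.
    rewrite /d2 eqxx; case: eqP => [E'|_]; [by exfalso; apply Hy01|ring].
  rewrite Hd10 Hd20.
  have : 0 < c t0 by rewrite /c; apply Rdiv_lt_0_compat.
  nra.
Qed.
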